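(* Let $\alpha,\beta,\gamma,\eta>0$ and $\rho\in(0,1)$ with $\gamma\geq\alpha$, and consider the system $$S'=-\beta IS+\gamma(1-S-I-R)+\eta R,\qquad I'=\rho\beta IS-\alpha I+\beta I(1-S-I-R),\qquad R'=\alpha I-\eta R.$$ (a) The system has a unique disease-free equilibrium (an equilibrium with $I=0$), namely $\mathcal{E}_0=(S,I,R)=(1,0,0)$, and it exists for every such choice of parameters. (b) Let $\mathcal{R}_0:=\frac{\rho\beta}{\alpha}$. Then $\mathcal{E}_0$ is locally asymptotically stable if $\mathcal{R}_0<1$ and unstable if $\mathcal{R}_0>1$.
   Context: This is the reduced form (using $W=1-S-I-R$) of a four-compartment model $S,W,I,R$ with total population normalized to $1$, in which the transmission rates from $S$ and from $W$ are taken equal to $\beta$. The state $(S,I,R)$ corresponds to nonnegative compartments with $S+I+R\le 1$. *)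

(* Defs.v *)
From Stdlib Require Import Reals.
From Coquelicot Require Import Coquelicot.
Open Scope R_scope.

Definition state := (R * R * R)%type.
Definition pS (x : state) : R := fst (fst x).
Definition pI (x : state) : R := snd (fst x).
Definition pR (x : state) : R := snd x.

(* The vector field of the reduced model (W = 1 - S - I - R). *)
Definition sirw_field (alpha beta gamma eta rho : R) (x : state) : state :=
  let s := pS x in let i := pI x in let r := pR x in
  (( - beta * i * s + gamma * (1 - s - i - r) + eta * r,
     rho * beta * i * s - alpha * i + beta * i * (1 - s - i - r)),
     alpha * i - eta * r).

Definition basic_R0 (alpha beta rho : R) : R := rho * beta / alpha.

Definition dist3 (x y : state) : R :=
  sqrt ((pS x - pS y)^2 + (pI x - pI y)^2 + (pR x - pR y)^2).

Definition is_equilibrium (F : state -> state) (xe : state) : Prop :=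
  F xe = (0, 0, 0).

Definition sol_on (F : state -> state) (x : R -> state) (T : R) : Prop :=
  (forall t, 0 < t < T ->
     is_derive (fun u => pS (x u)) t (pS (F (x t))) /\
     is_derive (fun u => pI (x u)) t (pI (F (x t))) /\
     is_derive (fun u => pR (x u)) t (pR (F (x t)))) /\
  filterlim (fun u => pS (x u)) (at_right 0) (locally (pS (x 0))) /\
  filterlim (fun u => pI (x u)) (at_right 0) (locally (pI (x 0))) /\
  filterlim (fun u => pR (x u)) (at_right 0) (locally (pR (x 0))).

Definition sol_global (F : state -> state) (x : R -> state) : Prop :=
  forall T, 0 < T -> sol_on F x T.

Definition lyap_stable (F : state -> state) (xe : state) : Prop :=
  forall eps, 0 < eps -> exists delta, 0 < delta /\
    forall (x : R -> state) (T : R), 0 < T -> sol_on F x T ->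
      dist3 (x 0) xe < delta ->
      forall t, 0 <= t < T -> dist3 (x t) xe < eps.

Definition loc_attractive (F : state -> state) (xe : state) : Prop :=
  exists delta, 0 < delta /\
    forall x : R -> state, sol_global F x -> dist3 (x 0) xe < delta ->
      filterlim (fun t => dist3 (x t) xe) (Rbar_locally p_infty) (locally 0).

Definition loc_asymp_stable (F : state -> state) (xe : state) : Prop :=
  lyap_stable F xe /\ loc_attractive F xe.

Definition unstable (F : state -> state) (xe : state) : Prop :=
  ~ lyap_stable F xe.

(* Main.v *)
Require Import Defs.
From Stdlib Require Import Reals Lra Lia Psatz.
From Coquelicot Require Import Coquelicot.
Open Scope R_scope.


Lemma ballR (x e y : R) : ball x e y <-> Rabs (y - x) < e.
Proof. split; intro H; exact H. Qed.

Definition rc0 (f : R -> R) := forall e, 0 < e -> exists d, 0 < d /\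
  forall u, 0 < u < d -> Rabs (f u - f 0) < e.

Lemma rc0_of_fl f : filterlim f (at_right 0) (locally (f 0)) -> rc0 f.
Proof.
  intros H e He.
  destruct (proj1 (filterlim_locally f (f 0)) H (mkposreal e He)) as [d Hd].
  exists d; split; [apply cond_pos|]. intros u [H1 H2].
  apply ballR. apply Hd; [|exact H1]. apply ballR. rewrite Rminus_0_r, Rabs_pos_eq; lra.
Qed.

Lemma fl_of_rc0 f : rc0 f -> filterlim f (at_right 0) (locally (f 0)).
Proof.
  intros H. apply filterlim_locally. intros [e He].
  destruct (H e He) as [d [Hd Hd']].
  exists (mkposreal d Hd). intros y Hy Hy0. apply ballR. apply Hd'.
  assert (Hy1 : Rabs (y - 0) < d) by (apply ballR; exact Hy). apply Rabs_lt_between in Hy1. lra.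
Qed.

Lemma cont_eps (g : R -> R) m : continuous g m -> forall e, 0 < e -> exists d, 0 < d /\
  forall v, Rabs (v - m) < d -> Rabs (g v - g m) < e.
Proof.
  intros H e He.
  destruct (proj1 (filterlim_locally g (g m)) H (mkposreal e He)) as [d Hd].
  exists d; split; [apply cond_pos|]. intros v Hv. apply ballR, Hd, ballR, Hv.
Qed.

Lemma Rle_neq_lt (a b : R) : a <= b -> a <> b -> a < b.
Proof. intros [H|H] H'; [exact H|contradiction]. Qed.

Lemma cont_ind (g : R -> R) (T L : R) : 0 < T -> g 0 < L -> rc0 g ->
  (forall t, 0 < t <= T -> continuous g t) ->
  (forall m, 0 < m <= T -> (forall u, 0 <= u < m -> g u < L) -> g m < L) ->
  forall t, 0 <= t <= T -> g t < L.
Proof.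
  intros HT H0 Hrc Hc Hind.
  set (E := fun s => 0 <= s <= T /\ forall u, 0 <= u <= s -> g u < L).
  assert (Eb : bound E). { exists T. intros s [Hs _]. lra. }
  assert (E0 : exists x, E x).
  { exists 0. split; [lra|]. intros u Hu. replace u with 0 by lra. exact H0. }
  destruct (completeness E Eb E0) as [m [Hub Hlub]].
  assert (Hm0 : 0 <= m). { apply Hub. split; [lra|]. intros u Hu. replace u with 0 by lra. exact H0. }
  assert (HmT : m <= T). { apply Hlub. intros s [Hs _]. lra. }
  assert (A : forall u, 0 <= u < m -> g u < L).
  { intros u Hu. destruct (Rle_or_lt m u) as [Hc'|Hc']; [lra|].
    assert (~ is_upper_bound E u).
    { intro Hu'. specialize (Hlub u Hu'). lra. }
    apply Classical_Pred_Type.not_all_ex_not in H. destruct H as [s Hs].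
    apply Classical_Prop.imply_to_and in Hs. destruct Hs as [[Hs1 Hs2] Hs3].
    apply Hs2. lra. }
  assert (B : g m < L).
  { destruct (Req_dec m 0) as [->|Hne]; [exact H0|]. apply Hind; [lra|exact A]. }
  assert (C : exists d, 0 < d /\ forall v, 0 <= v -> Rabs (v - m) < d -> g v < L).
  { destruct (Req_dec m 0) as [->|Hne].
    - destruct (Hrc (L - g 0)) as [d [Hd Hd']]; [lra|].
      exists d; split; [lra|]. intros v Hv Hv'.
      destruct (Req_dec v 0) as [->|Hv0]; [lra|].
      rewrite Rminus_0_r, Rabs_pos_eq in Hv' by lra.
      assert (Hx := Hd' v (conj (Rle_neq_lt _ _ Hv (not_eq_sym Hv0)) Hv')).
      apply Rabs_lt_between in Hx; lra.
    - destruct (cont_eps g m (Hc m (conj (Rle_neq_lt _ _ Hm0 (not_eq_sym Hne)) HmT)) (L - g m)) as [d [Hd Hd']]; [lra|].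
      exists d; split; [lra|]. intros v Hv Hv'. specialize (Hd' v Hv').
      apply Rabs_lt_between in Hd'; lra. }
  destruct C as [d [Hd Hd']].
  assert (Hs : E (Rmin T (m + d/2))).
  { split. split; [apply Rmin_glb; lra|apply Rmin_l].
    intros u Hu. destruct (Rlt_or_le u m) as [Hu'|Hu']; [apply A; lra|].
    apply Hd'; [lra|]. assert (u <= m + d/2) by (eapply Rle_trans; [apply Hu|apply Rmin_r]).
    rewrite Rabs_pos_eq; lra. }
  specialize (Hub _ Hs).
  assert (HmT' : m = T).
  { unfold Rmin in Hub. destruct (Rle_dec T (m + d/2)); lra. }
  intros t Ht. destruct (Rlt_or_le t m) as [Hlt|Hge]; [apply A; lra|].
  replace t with m by lra. exact B.
Qed.

Lemma mono0 (h dh : R -> R) (t : R) : 0 < t -> rc0 h ->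
  (forall s, 0 < s <= t -> is_derive h s (dh s)) ->
  (forall s, 0 < s < t -> dh s <= 0) -> h t <= h 0.
Proof.
  intros Ht Hrc Hd Hneg.
  apply Rnot_lt_le. intro Hlt.
  destruct (Hrc (h t - h 0)) as [d [Hd0 Hd']]; [lra|].
  set (eps := Rmin (d/2) (t/2)).
  assert (He1 : 0 < eps) by (apply Rmin_glb_lt; lra).
  assert (He2 : eps <= d/2) by apply Rmin_l.
  assert (He3 : eps <= t/2) by apply Rmin_r.
  assert (Hder : forall c, eps <= c <= t -> derivable_pt_lim h c (dh c)).
  { intros c Hc. apply is_derive_Reals. apply Hd. lra. }
  destruct (MVT_cor2 h dh eps t ltac:(lra) Hder) as [c [Hc1 Hc2]].
  assert (dh c <= 0) by (apply Hneg; lra).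
  assert (Hx : Rabs (h eps - h 0) < h t - h 0) by (apply Hd'; lra).
  apply Rabs_lt_between in Hx.
  assert (dh c * (t - eps) <= 0).
  { apply Rmult_le_0_r; lra. }
  lra.
Qed.

Lemma derive_cont (f : R -> R) t l : is_derive f t l -> continuous f t.
Proof. intro H. apply (@ex_derive_continuous R_AbsRing R_NormedModule f t). exists l. exact H. Qed.

Lemma barrier (f df : R -> R) (T L : R) : rc0 f ->
  (forall t, 0 < t < T -> is_derive f t (df t)) -> f 0 < L ->
  (forall t, 0 < t < T -> f t < L -> df t <= 0) ->
  forall t, 0 <= t < T -> f t <= f 0.
Proof.
  intros Hrc Hd H0 Hneg t Ht.
  destruct (Req_dec t 0) as [->|Hne]; [lra|].
  assert (Hlt : forall s, 0 <= s <= t -> f s < L).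
  { apply cont_ind; auto; [lra| |].
    - intros s Hs. eapply derive_cont, Hd. lra.
    - intros m Hm HA. eapply Rle_lt_trans; [|exact H0].
      apply (mono0 f df); auto; [lra| |].
      + intros s Hs. apply Hd; lra.
      + intros s Hs. apply Hneg; [lra|]. apply HA; lra. }
  apply (mono0 f df); auto; [lra| |].
  + intros s Hs. apply Hd; lra.
  + intros s Hs. apply Hneg; [lra|]. apply Hlt; lra.
Qed.


Lemma dplus (f g : R -> R) t a b : is_derive f t a -> is_derive g t b ->
  is_derive (fun u => f u + g u) t (a + b).
Proof. intros H1 H2. exact (is_derive_plus f g t a b H1 H2). Qed.
Lemma dminus (f g : R -> R) t a b : is_derive f t a -> is_derive g t b ->
  is_derive (fun u => f u - g u) t (a - b).
Proof. intros H1 H2. exact (is_derive_minus f g t a b H1 H2). Qed.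
Lemma dmult (f g : R -> R) t a b : is_derive f t a -> is_derive g t b ->
  is_derive (fun u => f u * g u) t (a * g t + f t * b).
Proof. intros H1 H2. exact (is_derive_mult f g t a b H1 H2 Rmult_comm). Qed.
Lemma dconst (c t : R) : is_derive (fun _ => c) t 0.
Proof. exact (is_derive_const c t). Qed.
Lemma did (t : R) : is_derive (fun u => u) t 1.
Proof. exact (is_derive_id t). Qed.
Lemma dval (f : R -> R) t a b : is_derive f t a -> a = b -> is_derive f t b.
Proof. intros H ->; exact H. Qed.
Ltac rr := match goal with |- ?a = ?b => change (@eq R a b) end; ring.

Definition n1d (y z : state) := Rabs (pS y - pS z) + Rabs (pI y - pI z) + Rabs (pR y - pR z).

Fixpoint pic (F : state -> state) (y0 : state) (n : nat) (t : R) : state :=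
  match n with
  | O => y0
  | S k => (pS y0 + RInt (fun s => pS (F (pic F y0 k s))) 0 t,
            pI y0 + RInt (fun s => pI (F (pic F y0 k s))) 0 t,
            pR y0 + RInt (fun s => pR (F (pic F y0 k s))) 0 t)
  end.

Lemma ftc (g : R -> R) : (forall t, continuous g t) ->
  forall t, is_derive (fun u => RInt g 0 u) t (g t).
Proof.
  intros Hc t. apply (is_derive_RInt g (fun u => RInt g 0 u) 0 t).
  - apply filter_forall. intros b. apply (RInt_correct g 0 b).
    apply ex_RInt_continuous. intros z _. apply Hc.
  - apply Hc.
Qed.

Lemma cont_comp (F : state -> state) (p : state -> R) (Lc : R) (g : R -> state) t :
  0 <= Lc -> (forall y z, Rabs (p (F y) - p (F z)) <= Lc * n1d y z) ->
  continuous (fun s => pS (g s)) t -> continuous (fun s => pI (g s)) t ->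
  continuous (fun s => pR (g s)) t -> continuous (fun s => p (F (g s))) t.
Proof.
  intros HLc HL H1 H2 H3. apply filterlim_locally. intros [e He].
  set (e' := e / (3 * (Lc + 1))).
  assert (He' : 0 < e') by (unfold e'; apply Rdiv_lt_0_compat; lra).
  destruct (cont_eps _ _ H1 e' He') as [d1 [Hd1 Hd1']].
  destruct (cont_eps _ _ H2 e' He') as [d2 [Hd2 Hd2']].
  destruct (cont_eps _ _ H3 e' He') as [d3 [Hd3 Hd3']].
  set (d := Rmin d1 (Rmin d2 d3)).
  assert (Hd : 0 < d) by (unfold d; repeat apply Rmin_glb_lt; lra).
  exists (mkposreal d Hd). intros v Hv.
  assert (Hv' : Rabs (v - t) < d) by exact Hv.
  assert (Hm1 : d <= d1) by apply Rmin_l.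
  assert (Hm2 : d <= d2) by (eapply Rle_trans; [apply Rmin_r|apply Rmin_l]).
  assert (Hm3 : d <= d3) by (eapply Rle_trans; [apply Rmin_r|apply Rmin_r]).
  apply ballR.
  specialize (Hd1' v ltac:(lra)). specialize (Hd2' v ltac:(lra)). specialize (Hd3' v ltac:(lra)).
  eapply Rle_lt_trans; [apply HL|]. unfold n1d.
  assert (Lc * (Rabs (pS (g v) - pS (g t)) + Rabs (pI (g v) - pI (g t)) + Rabs (pR (g v) - pR (g t)))
          <= Lc * (3 * e')) by (apply Rmult_le_compat_l; lra).
  assert (Lc * (3 * e') < e).
  { unfold e'. field_simplify; [|lra]. apply Rmult_lt_reg_r with (Lc + 1); [lra|].
    field_simplify; lra. }
  simpl. lra.
Qed.

Definition lipF (F : state -> state) (Lc : R) := forall y z, n1d (F y) (F z) <= Lc * n1d y z.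
Definition bndF (F : state -> state) (B : R) :=
  forall y, Rabs (pS (F y)) + Rabs (pI (F y)) + Rabs (pR (F y)) <= B.

Lemma lip1 F Lc : lipF F Lc -> forall y z, Rabs (pS (F y) - pS (F z)) <= Lc * n1d y z.
Proof. intros H y z. eapply Rle_trans; [|apply H]. unfold n1d.
  assert (0 <= Rabs (pI (F y) - pI (F z))) by apply Rabs_pos.
  assert (0 <= Rabs (pR (F y) - pR (F z))) by apply Rabs_pos. lra. Qed.
Lemma lip2 F Lc : lipF F Lc -> forall y z, Rabs (pI (F y) - pI (F z)) <= Lc * n1d y z.
Proof. intros H y z. eapply Rle_trans; [|apply H]. unfold n1d.
  assert (0 <= Rabs (pS (F y) - pS (F z))) by apply Rabs_pos.
  assert (0 <= Rabs (pR (F y) - pR (F z))) by apply Rabs_pos. lra. Qed.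
Lemma lip3 F Lc : lipF F Lc -> forall y z, Rabs (pR (F y) - pR (F z)) <= Lc * n1d y z.
Proof. intros H y z. eapply Rle_trans; [|apply H]. unfold n1d.
  assert (0 <= Rabs (pI (F y) - pI (F z))) by apply Rabs_pos.
  assert (0 <= Rabs (pS (F y) - pS (F z))) by apply Rabs_pos. lra. Qed.

Lemma pic_cont F Lc y0 : 0 <= Lc -> lipF F Lc -> forall n t,
  continuous (fun s => pS (pic F y0 n s)) t /\ continuous (fun s => pI (pic F y0 n s)) t /\
  continuous (fun s => pR (pic F y0 n s)) t.
Proof.
  intros HLc HL n. induction n as [|n IH]; intros t.
  - simpl. split; [|split]; apply continuous_const.
  - assert (C1 : forall s, continuous (fun u => pS (F (pic F y0 n u))) s).
    { intro s. destruct (IH s) as [A [B C]]. eapply cont_comp; eauto. apply lip1; auto. }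
    assert (C2 : forall s, continuous (fun u => pI (F (pic F y0 n u))) s).
    { intro s. destruct (IH s) as [A [B C]]. eapply cont_comp; eauto. apply lip2; auto. }
    assert (C3 : forall s, continuous (fun u => pR (F (pic F y0 n u))) s).
    { intro s. destruct (IH s) as [A [B C]]. eapply cont_comp; eauto. apply lip3; auto. }
    simpl. split; [|split]; eapply derive_cont; (apply dplus; [apply dconst| apply ftc; auto]).
Qed.

Lemma pic_der F Lc y0 : 0 <= Lc -> lipF F Lc -> forall n t,
  is_derive (fun s => pS (pic F y0 (S n) s)) t (pS (F (pic F y0 n t))) /\
  is_derive (fun s => pI (pic F y0 (S n) s)) t (pI (F (pic F y0 n t))) /\
  is_derive (fun s => pR (pic F y0 (S n) s)) t (pR (F (pic F y0 n t))).
Proof.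
  intros HLc HL n t.
  assert (C1 : forall s, continuous (fun u => pS (F (pic F y0 n u))) s).
  { intro s. destruct (pic_cont F Lc y0 HLc HL n s) as [A [B C]]. eapply cont_comp; eauto. apply lip1; auto. }
  assert (C2 : forall s, continuous (fun u => pI (F (pic F y0 n u))) s).
  { intro s. destruct (pic_cont F Lc y0 HLc HL n s) as [A [B C]]. eapply cont_comp; eauto. apply lip2; auto. }
  assert (C3 : forall s, continuous (fun u => pR (F (pic F y0 n u))) s).
  { intro s. destruct (pic_cont F Lc y0 HLc HL n s) as [A [B C]]. eapply cont_comp; eauto. apply lip3; auto. }
  simpl. split; [|split]; (eapply dval; [apply dplus; [apply dconst| apply ftc; auto]|]).
  all: apply Rplus_0_l.
Qed.

Lemma st_eta (y : state) : y = (pS y, pI y, pR y).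
Proof. destruct y as [[a b] c]; reflexivity. Qed.

Lemma pic0 F y0 n : pic F y0 n 0 = y0.
Proof.
  destruct n; [reflexivity|]. simpl. rewrite !RInt_point. rewrite (st_eta y0) at 4.
  change (@zero R_NormedModule) with 0. rewrite !Rplus_0_r. reflexivity.
Qed.

Lemma abs3 a b c M : (forall s1 s2 s3, (s1 = 1 \/ s1 = -1) -> (s2 = 1 \/ s2 = -1) ->
  (s3 = 1 \/ s3 = -1) -> s1 * a + s2 * b + s3 * c <= M) -> Rabs a + Rabs b + Rabs c <= M.
Proof.
  intros H.
  assert (E : forall x, exists s, (s = 1 \/ s = -1) /\ s * x = Rabs x).
  { intro x. destruct (Rle_or_lt 0 x).
    - exists 1. split; [auto|]. rewrite Rabs_pos_eq; lra.
    - exists (-1). split; [auto|]. rewrite Rabs_left; lra. }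
  destruct (E a) as [s1 [H1 E1]]. destruct (E b) as [s2 [H2 E2]]. destruct (E c) as [s3 [H3 E3]].
  rewrite <- E1, <- E2, <- E3. apply H; auto.
Qed.

Lemma sgn_le s x : (s = 1 \/ s = -1) -> s * x <= Rabs x.
Proof. intros [-> | ->]. rewrite Rmult_1_l; apply Rle_abs.
  replace (-1 * x) with (- x) by ring. rewrite <- Rabs_Ropp. apply Rle_abs. Qed.

Lemma rc0_of_cont f : continuous f 0 -> rc0 f.
Proof. intros H e He. destruct (cont_eps f 0 H e He) as [d [Hd Hd']].
  exists d; split; auto. intros u Hu. apply Hd'. rewrite Rminus_0_r, Rabs_pos_eq; lra. Qed.

Lemma drift F Lc B y0 : 0 <= Lc -> lipF F Lc -> bndF F B -> forall n t, 0 <= t ->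
  n1d (pic F y0 n t) y0 <= B * t.
Proof.
  intros HLc HL HB n t Ht.
  assert (HB0 : 0 <= B).
  { specialize (HB y0). pose proof (Rabs_pos (pS (F y0))). pose proof (Rabs_pos (pI (F y0))).
    pose proof (Rabs_pos (pR (F y0))). lra. }
  destruct n as [|n].
  - unfold n1d. simpl. rewrite !Rminus_eq_0, Rabs_R0. nra.
  - destruct (Req_dec t 0) as [->|Hne].
    { rewrite pic0. unfold n1d. rewrite !Rminus_eq_0, Rabs_R0. lra. }
    apply abs3. intros s1 s2 s3 H1 H2 H3.
    set (h := fun u => s1 * (pS (pic F y0 (S n) u) - pS y0) + s2 * (pI (pic F y0 (S n) u) - pI y0)
                       + s3 * (pR (pic F y0 (S n) u) - pR y0) - B * u).
    assert (Hd : forall u, is_derive h u (s1 * pS (F (pic F y0 n u)) + s2 * pI (F (pic F y0 n u))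
                                          + s3 * pR (F (pic F y0 n u)) - B)).
    { intro u. destruct (pic_der F Lc y0 HLc HL n u) as [D1 [D2 D3]]. unfold h.
      eapply dval.
      - apply dminus; [apply dplus; [apply dplus|]|].
        + apply is_derive_scal. apply dminus; [exact D1|apply dconst].
        + apply is_derive_scal. apply dminus; [exact D2|apply dconst].
        + apply is_derive_scal. apply dminus; [exact D3|apply dconst].
        + apply is_derive_scal. apply did.
      - rr. }
    assert (Hm : h t <= h 0).
    { apply (mono0 h (fun u => s1 * pS (F (pic F y0 n u)) + s2 * pI (F (pic F y0 n u))
                                          + s3 * pR (F (pic F y0 n u)) - B) t); [lra| |intros; apply Hd|].
      - apply rc0_of_cont. eapply derive_cont. apply Hd.
      - intros u Hu. specialize (HB (pic F y0 n u)).
        pose proof (sgn_le s1 (pS (F (pic F y0 n u))) H1).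
        pose proof (sgn_le s2 (pI (F (pic F y0 n u))) H2).
        pose proof (sgn_le s3 (pR (F (pic F y0 n u))) H3). lra. }
    unfold h in Hm. rewrite pic0 in Hm. lra.
Qed.

Definition Cn (B Lc : R) (n : nat) := B * Lc ^ n / INR (Factorial.fact (S n)).

Lemma Cn_S B Lc n : Cn B Lc (S n) * INR (S (S n)) = Lc * Cn B Lc n.
Proof.
  unfold Cn. rewrite (fact_simpl (S n)), mult_INR.
  assert (INR (S (S n)) <> 0) by (apply not_0_INR; lia).
  pose proof (INR_fact_neq_0 (S n)). simpl pow. field. split; auto.
Qed.

Lemma n1d_sym y z : n1d y z = n1d z y.
Proof. unfold n1d. rewrite (Rabs_minus_sym (pS y)), (Rabs_minus_sym (pI y)), (Rabs_minus_sym (pR y)). reflexivity. Qed.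

Lemma n1d_tri x y z : n1d x z <= n1d x y + n1d y z.
Proof. unfold n1d.
  pose proof (Rabs_triang (pS x - pS y) (pS y - pS z)).
  pose proof (Rabs_triang (pI x - pI y) (pI y - pI z)).
  pose proof (Rabs_triang (pR x - pR y) (pR y - pR z)).
  replace (pS x - pS z) with (pS x - pS y + (pS y - pS z)) by ring.
  replace (pI x - pI z) with (pI x - pI y + (pI y - pI z)) by ring.
  replace (pR x - pR z) with (pR x - pR y + (pR y - pR z)) by ring. lra. Qed.

Lemma n1d_pos y z : 0 <= n1d y z.
Proof. unfold n1d. pose proof (Rabs_pos (pS y - pS z)). pose proof (Rabs_pos (pI y - pI z)).
  pose proof (Rabs_pos (pR y - pR z)). lra. Qed.

Lemma bound F Lc B y0 : 0 <= Lc -> lipF F Lc -> bndF F B -> forall n t, 0 <= t ->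
  n1d (pic F y0 (S n) t) (pic F y0 n t) <= Cn B Lc n * t ^ (S n).
Proof.
  intros HLc HL HB n. induction n as [|n IH]; intros t Ht.
  - pose proof (drift F Lc B y0 HLc HL HB 1 t Ht). simpl pic at 2. unfold Cn. simpl.
    replace (B * 1 / 1 * (t * 1)) with (B * t) by field. exact H.
  - destruct (Req_dec t 0) as [->|Hne].
    { rewrite !pic0. unfold n1d. rewrite !Rminus_eq_0, Rabs_R0. rewrite pow_i by lia. lra. }
    unfold n1d at 1. apply abs3. intros s1 s2 s3 H1 H2 H3.
    set (h := fun u => s1 * (pS (pic F y0 (S (S n)) u) - pS (pic F y0 (S n) u))
                     + s2 * (pI (pic F y0 (S (S n)) u) - pI (pic F y0 (S n) u))
                     + s3 * (pR (pic F y0 (S (S n)) u) - pR (pic F y0 (S n) u))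
                     - Cn B Lc (S n) * u ^ (S (S n))).
    set (dh := fun u => s1 * (pS (F (pic F y0 (S n) u)) - pS (F (pic F y0 n u)))
                     + s2 * (pI (F (pic F y0 (S n) u)) - pI (F (pic F y0 n u)))
                     + s3 * (pR (F (pic F y0 (S n) u)) - pR (F (pic F y0 n u)))
                     - Cn B Lc (S n) * (INR (S (S n)) * u ^ (S n))).
    assert (Hd : forall u, is_derive h u (dh u)).
    { intro u. destruct (pic_der F Lc y0 HLc HL (S n) u) as [D1 [D2 D3]].
      destruct (pic_der F Lc y0 HLc HL n u) as [E1 [E2 E3]]. unfold h, dh.
      eapply dval.
      - apply dminus; [apply dplus; [apply dplus|]|].
        + apply is_derive_scal. apply dminus; [exact D1|exact E1].
        + apply is_derive_scal. apply dminus; [exact D2|exact E2].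
        + apply is_derive_scal. apply dminus; [exact D3|exact E3].
        + apply is_derive_scal. apply is_derive_pow. apply did.
      - simpl pred. cbv beta. rr. }
    assert (Hm : h t <= h 0).
    { apply (mono0 h dh t); [lra| |intros; apply Hd|].
      - apply rc0_of_cont. eapply derive_cont. apply Hd.
      - intros u Hu. unfold dh.
        pose proof (lipF_n1d := HL (pic F y0 (S n) u) (pic F y0 n u)).
        unfold n1d in lipF_n1d at 1.
        pose proof (sgn_le s1 (pS (F (pic F y0 (S n) u)) - pS (F (pic F y0 n u))) H1).
        pose proof (sgn_le s2 (pI (F (pic F y0 (S n) u)) - pI (F (pic F y0 n u))) H2).
        pose proof (sgn_le s3 (pR (F (pic F y0 (S n) u)) - pR (F (pic F y0 n u))) H3).
        pose proof (IH u ltac:(lra)).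
        assert (Lc * n1d (pic F y0 (S n) u) (pic F y0 n u) <= Lc * (Cn B Lc n * u ^ S n))
          by (apply Rmult_le_compat_l; auto).
        rewrite <- Rmult_assoc, Cn_S. lra. }
    unfold h in Hm. rewrite !pic0 in Hm. rewrite pow_i in Hm by lia. lra.
Qed.

Definition aexp (q : R) (k : nat) := / INR (Factorial.fact k) * q ^ k.

Lemma aexp_ex q : ex_series (aexp q).
Proof. destruct (exist_exp q) as [l Hl]. apply ex_series_Reals_1. exists l. exact Hl. Qed.

Lemma aexp_pos q k : 0 <= q -> 0 <= aexp q k.
Proof. intro. unfold aexp. apply Rmult_le_pos; [|apply pow_le; auto].
  left. apply Rinv_0_lt_compat. apply INR_fact_lt_0. Qed.

Lemma Cn_le B Lc T n t : 0 <= B -> 0 <= Lc -> 0 <= t <= T ->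
  Cn B Lc n * t ^ (S n) <= B * T * aexp (Lc * T) n.
Proof.
  intros HB HLc Ht.
  assert (HC : 0 <= Cn B Lc n).
  { unfold Cn. apply Rmult_le_pos; [apply Rmult_le_pos; [auto|apply pow_le; auto]|].
    left. apply Rinv_0_lt_compat. apply INR_fact_lt_0. }
  apply Rle_trans with (Cn B Lc n * T ^ (S n)).
  { apply Rmult_le_compat_l; auto. apply pow_incr. auto. }
  assert (E : Cn B Lc n * T ^ (S n) = B * T * aexp (Lc * T) n / INR (S n)).
  { unfold Cn, aexp. rewrite fact_simpl, mult_INR, Rpow_mult_distr.
    pose proof (INR_fact_neq_0 n). assert (INR (S n) <> 0) by (apply not_0_INR; lia).
    rewrite <- tech_pow_Rmult. field. auto. }
  rewrite E.
  assert (H1 : 1 <= INR (S n)) by (rewrite S_INR; pose proof (pos_INR n); lra).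
  assert (H0 : 0 <= B * T * aexp (Lc * T) n).
  { apply Rmult_le_pos; [apply Rmult_le_pos; lra|apply aexp_pos; apply Rmult_le_pos; lra]. }
  unfold Rdiv. rewrite <- (Rmult_1_r (B * T * aexp (Lc * T) n)) at 2.
  apply Rmult_le_compat_l; auto.
  rewrite <- Rinv_1. apply Rinv_le_contravar; lra.
Qed.

Lemma tail F Lc B y0 T : 0 <= Lc -> lipF F Lc -> bndF F B -> 0 <= B -> forall n k t, 0 <= t <= T ->
  n1d (pic F y0 (S (n + k)) t) (pic F y0 n t) <= B * T * sum_n_m (aexp (Lc * T)) n (n + k).
Proof.
  intros HLc HL HB HB0 n k. induction k as [|k IH]; intros t Ht.
  - rewrite Nat.add_0_r, sum_n_n. eapply Rle_trans; [apply (bound F Lc B y0); [auto|auto|auto|lra]|].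
    apply Cn_le; auto.
  - eapply Rle_trans; [apply (n1d_tri _ (pic F y0 (S (n + k)) t))|].
    rewrite Nat.add_succ_r. rewrite sum_n_Sm by lia.
    change (plus (sum_n_m (aexp (Lc * T)) n (n + k)) (aexp (Lc * T) (S (n + k))))
      with (sum_n_m (aexp (Lc * T)) n (n + k) + aexp (Lc * T) (S (n + k))).
    pose proof (IH t Ht).
    assert (n1d (pic F y0 (S (S (n + k))) t) (pic F y0 (S (n + k)) t) <= B * T * aexp (Lc * T) (S (n + k))).
    { eapply Rle_trans; [apply (bound F Lc B y0); [auto|auto|auto|lra]|]. apply Cn_le; auto. }
    lra.
Qed.

Lemma ucauchy F Lc B y0 T : 0 <= Lc -> lipF F Lc -> bndF F B -> 0 <= B -> 0 <= T ->
  forall eps, 0 < eps -> exists N, forall n m t, 0 <= t <= T -> (N <= n)%nat -> (N <= m)%nat ->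
  n1d (pic F y0 n t) (pic F y0 m t) < eps.
Proof.
  intros HLc HL HB HB0 HT eps Heps.
  assert (HC := Cauchy_ex_series _ (aexp_ex (Lc * T))).
  set (e' := eps / (B * T + 1)).
  assert (He' : 0 < e') by (unfold e'; apply Rdiv_lt_0_compat; nra).
  destruct (HC (mkposreal e' He')) as [N HN].
  exists N. intros n m t Ht Hn Hm.
  assert (key : forall n m, (N <= n)%nat -> (N <= m)%nat -> (n < m)%nat ->
            n1d (pic F y0 n t) (pic F y0 m t) < eps).
  { intros n' m' Hn' Hm' Hlt.
    replace m' with (S (n' + (m' - n' - 1))) by lia.
    rewrite n1d_sym. eapply Rle_lt_trans; [apply (tail F Lc B y0 T); auto|].
    specialize (HN n' (n' + (m' - n' - 1))%nat Hn' ltac:(lia)).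
    change (norm (sum_n_m (aexp (Lc * T)) n' (n' + (m' - n' - 1))))
      with (Rabs (sum_n_m (aexp (Lc * T)) n' (n' + (m' - n' - 1)))) in HN.
    simpl in HN.
    pose proof (Rle_abs (sum_n_m (aexp (Lc * T)) n' (n' + (m' - n' - 1)))).
    assert (B * T * sum_n_m (aexp (Lc * T)) n' (n' + (m' - n' - 1)) <= B * T * e').
    { apply Rmult_le_compat_l; [nra|lra]. }
    assert (B * T * e' < eps).
    { unfold e'. apply Rmult_lt_reg_r with (B * T + 1); [nra|].
      field_simplify; nra. }
    lra. }
  destruct (Nat.lt_trichotomy n m) as [Hlt|[->|Hgt]].
  - apply key; auto.
  - unfold n1d. rewrite !Rminus_eq_0, Rabs_R0. lra.
  - rewrite n1d_sym. apply key; auto.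
Qed.

Definition xlim F y0 (t : R) : state :=
  (real (Lim_seq (fun n => pS (pic F y0 n t))), real (Lim_seq (fun n => pI (pic F y0 n t))),
   real (Lim_seq (fun n => pR (pic F y0 n t)))).

Lemma c1 y z : Rabs (pS y - pS z) <= n1d y z.
Proof. unfold n1d. pose proof (Rabs_pos (pI y - pI z)). pose proof (Rabs_pos (pR y - pR z)). lra. Qed.
Lemma c2 y z : Rabs (pI y - pI z) <= n1d y z.
Proof. unfold n1d. pose proof (Rabs_pos (pS y - pS z)). pose proof (Rabs_pos (pR y - pR z)). lra. Qed.
Lemma c3 y z : Rabs (pR y - pR z) <= n1d y z.
Proof. unfold n1d. pose proof (Rabs_pos (pI y - pI z)). pose proof (Rabs_pos (pS y - pS z)). lra. Qed.

Lemma bnd_pos F B : bndF F B -> 0 <= B.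
Proof. intro HB. specialize (HB (0,0,0)). pose proof (Rabs_pos (pS (F (0,0,0)))).
  pose proof (Rabs_pos (pI (F (0,0,0)))). pose proof (Rabs_pos (pR (F (0,0,0)))). lra. Qed.

Lemma seq_lim (u : nat -> R) : (forall eps, 0 < eps -> exists N, forall n m, (N <= n)%nat -> (N <= m)%nat ->
  Rabs (u n - u m) < eps) -> is_lim_seq u (real (Lim_seq u)).
Proof.
  intro H. assert (Hf : ex_finite_lim_seq u).
  { apply ex_lim_seq_cauchy_corr. intros [e He]. apply (H e He). }
  destruct Hf as [l Hl]. rewrite (is_lim_seq_unique _ _ Hl). exact Hl.
Qed.

Lemma conv F Lc B y0 : 0 <= Lc -> lipF F Lc -> bndF F B -> forall t, 0 <= t ->
  is_lim_seq (fun n => pS (pic F y0 n t)) (pS (xlim F y0 t)) /\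
  is_lim_seq (fun n => pI (pic F y0 n t)) (pI (xlim F y0 t)) /\
  is_lim_seq (fun n => pR (pic F y0 n t)) (pR (xlim F y0 t)).
Proof.
  intros HLc HL HB t Ht. pose proof (bnd_pos F B HB) as HB0.
  split; [|split]; apply seq_lim; intros eps Heps;
  destruct (ucauchy F Lc B y0 t HLc HL HB HB0 Ht eps Heps) as [N HN]; exists N; intros n m Hn Hm;
  (eapply Rle_lt_trans; [|apply (HN n m t); auto; lra]).
  apply c1. apply c2. apply c3.
Qed.

Lemma limF (p : state -> R) F Lc B y0 : 0 <= Lc -> lipF F Lc -> bndF F B ->
  (forall y z, Rabs (p (F y) - p (F z)) <= Lc * n1d y z) -> forall t, 0 <= t ->
  is_lim_seq (fun n => p (F (pic F y0 n t))) (p (F (xlim F y0 t))).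
Proof.
  intros HLc HL HB Hp t Ht. destruct (conv F Lc B y0 HLc HL HB t Ht) as [L1 [L2 L3]].
  apply is_lim_seq_spec. intros [eps Heps]. change (pos (mkposreal eps Heps)) with eps.
  apply is_lim_seq_spec in L1. apply is_lim_seq_spec in L2. apply is_lim_seq_spec in L3.
  set (e' := eps / (3 * (Lc + 1))).
  assert (He' : 0 < e') by (unfold e'; apply Rdiv_lt_0_compat; lra).
  destruct (L1 (mkposreal e' He')) as [N1 H1]. destruct (L2 (mkposreal e' He')) as [N2 H2].
  destruct (L3 (mkposreal e' He')) as [N3 H3].
  exists (N1 + N2 + N3)%nat. intros n Hn.
  specialize (H1 n ltac:(lia)). specialize (H2 n ltac:(lia)). specialize (H3 n ltac:(lia)). change (pos (mkposreal e' He')) with e' in H1, H2, H3.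
  eapply Rle_lt_trans; [apply Hp|]. unfold n1d.
  assert (Lc * (Rabs (pS (pic F y0 n t) - pS (xlim F y0 t)) + Rabs (pI (pic F y0 n t) - pI (xlim F y0 t)) +
     Rabs (pR (pic F y0 n t) - pR (xlim F y0 t))) <= Lc * (3 * e')) by (apply Rmult_le_compat_l; lra).
  assert (Lc * (3 * e') < eps).
  { unfold e'. field_simplify; [|lra]. apply Rmult_lt_reg_r with (Lc + 1); [lra|].
    field_simplify; lra. }
  lra.
Qed.

Lemma Derive_pic1 F Lc y0 : 0 <= Lc -> lipF F Lc -> forall k x,
  Derive (fun s => pS (pic F y0 (S k) s)) x = pS (F (pic F y0 k x)).
Proof. intros. apply is_derive_unique. apply (pic_der F Lc y0 H H0 k x). Qed.
Lemma Derive_pic2 F Lc y0 : 0 <= Lc -> lipF F Lc -> forall k x,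
  Derive (fun s => pI (pic F y0 (S k) s)) x = pI (F (pic F y0 k x)).
Proof. intros. apply is_derive_unique. apply (pic_der F Lc y0 H H0 k x). Qed.
Lemma Derive_pic3 F Lc y0 : 0 <= Lc -> lipF F Lc -> forall k x,
  Derive (fun s => pR (pic F y0 (S k) s)) x = pR (F (pic F y0 k x)).
Proof. intros. apply is_derive_unique. apply (pic_der F Lc y0 H H0 k x). Qed.

Lemma xder (p : state -> R) F Lc B y0 : 0 <= Lc -> lipF F Lc -> bndF F B ->
  (forall y z, Rabs (p (F y) - p (F z)) <= Lc * n1d y z) ->
  (forall y z, Rabs (p y - p z) <= n1d y z) ->
  (forall k x, is_derive (fun s => p (pic F y0 (S k) s)) x (p (F (pic F y0 k x)))) ->
  (forall t, 0 <= t -> is_lim_seq (fun n => p (pic F y0 n t)) (p (xlim F y0 t))) ->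
  forall t, 0 < t -> is_derive (fun u => real (Lim_seq (fun n => p (pic F y0 n u)))) t (p (F (xlim F y0 t))).
Proof.
  intros HLc HL HB Hp Hc Hd Hlim t Ht.
  pose proof (bnd_pos F B HB) as HB0.
  set (T := t + 1). set (D := fun s => 0 < s < T).
  assert (HDer : forall k x, Derive (fun s => p (pic F y0 (S k) s)) x = p (F (pic F y0 k x))).
  { intros. apply is_derive_unique. apply Hd. }
  assert (oD : open D) by (apply open_and; [apply open_gt|apply open_lt]).
  assert (cD : is_connected D) by (intros a b x Ha Hb Hx; unfold D in *; lra).
  assert (cvu : CVU_dom (fun n s => p (pic F y0 n s)) D).
  { apply CVU_dom_cauchy. intros [eps Heps].
    destruct (ucauchy F Lc B y0 T HLc HL HB HB0 ltac:(unfold T; lra) eps Heps) as [N HN].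
    exists N. intros n m x Hx Hn Hm. eapply Rle_lt_trans; [apply Hc|]. apply HN; auto.
    unfold D in Hx; lra. }
  assert (exd : forall n x, D x -> ex_derive (fun s => p (pic F y0 n s)) x).
  { intros [|k] x _. - exists 0. exact (dconst (p y0) x). - exists (p (F (pic F y0 k x))). apply Hd. }
  assert (contd : forall n x, D x -> continuity_pt (Derive (fun s => p (pic F y0 n s))) x).
  { intros [|k] x _.
    - apply continuity_pt_ext with (fun _ => 0).
      + intro u. symmetry. exact (Derive_const (p y0) u).
      + apply continuity_pt_const. intros a b; reflexivity.
    - apply continuity_pt_ext with (fun u => p (F (pic F y0 k u))).
      + intro u. symmetry. apply HDer.
      + apply continuity_pt_filterlim.
        destruct (pic_cont F Lc y0 HLc HL k x) as [A1 [A2 A3]]. apply (cont_comp F p Lc (pic F y0 k) x); auto. }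
  assert (cvud : CVU_dom (fun n x => Derive (fun s => p (pic F y0 n s)) x) D).
  { apply CVU_dom_cauchy. intros [eps Heps].
    destruct (ucauchy F Lc B y0 T HLc HL HB HB0 ltac:(unfold T; lra) (eps / (Lc + 1)))
      as [N HN]; [apply Rdiv_lt_0_compat; lra|].
    exists (S N). intros [|n] [|m] x Hx Hn Hm; try lia.
    rewrite !HDer. eapply Rle_lt_trans; [apply Hp|].
    assert (H1 : n1d (pic F y0 n x) (pic F y0 m x) < eps / (Lc + 1)).
    { apply HN; [unfold D in Hx; lra|lia|lia]. }
    assert (H2 : Lc * n1d (pic F y0 n x) (pic F y0 m x) <= Lc * (eps / (Lc + 1))).
    { apply Rmult_le_compat_l; lra. }
    assert (H3 : Lc * (eps / (Lc + 1)) < eps).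
    { apply Rmult_lt_reg_r with (Lc + 1); [lra|]. field_simplify; lra. }
    simpl. lra. }
  pose proof (CVU_Derive _ D oD cD cvu exd contd cvud t ltac:(unfold D, T; lra)) as H.
  eapply dval; [exact H|].
  rewrite <- Lim_seq_incr_1.
  rewrite (Lim_seq_ext _ (fun n => p (F (pic F y0 n t)))) by (intro; apply HDer).
  rewrite (is_lim_seq_unique _ _ (limF p F Lc B y0 HLc HL HB Hp t ltac:(lra))). reflexivity.
Qed.

Lemma xlim0 F y0 : xlim F y0 0 = y0.
Proof.
  unfold xlim. transitivity (pS y0, pI y0, pR y0); [|symmetry; apply st_eta].
  rewrite (Lim_seq_ext _ (fun _ => pS y0)) by (intro; rewrite pic0; reflexivity).
  rewrite (Lim_seq_ext (fun n => pI _) (fun _ => pI y0)) by (intro; rewrite pic0; reflexivity).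
  rewrite (Lim_seq_ext (fun n => pR _) (fun _ => pR y0)) by (intro; rewrite pic0; reflexivity).
  rewrite !Lim_seq_const. reflexivity.
Qed.

Lemma lim_near (u : nat -> R) (l c r : R) : is_lim_seq u l -> (forall n, Rabs (u n - c) <= r) -> Rabs (l - c) <= r.
Proof.
  intros Hl Hn. apply Rabs_le. split.
  - assert (Hx := is_lim_seq_le (fun _ => c - r) u (c - r) l).
    simpl in Hx. cut (c - r <= l); [lra|]. apply Hx; [|apply is_lim_seq_const|exact Hl].
    intro n. specialize (Hn n). apply Rabs_le_between' in Hn. lra.
  - assert (Hx := is_lim_seq_le u (fun _ => c + r) l (c + r)).
    simpl in Hx. cut (l <= c + r); [lra|]. apply Hx; [|exact Hl|apply is_lim_seq_const].
    intro n. specialize (Hn n). apply Rabs_le_between' in Hn. lra.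
Qed.

Lemma picard F Lc B y0 : 0 <= Lc -> lipF F Lc -> bndF F B ->
  exists x : R -> state, x 0 = y0 /\
   (forall t, 0 < t ->
     is_derive (fun u => pS (x u)) t (pS (F (x t))) /\
     is_derive (fun u => pI (x u)) t (pI (F (x t))) /\
     is_derive (fun u => pR (x u)) t (pR (F (x t)))) /\
   rc0 (fun u => pS (x u)) /\ rc0 (fun u => pI (x u)) /\ rc0 (fun u => pR (x u)).
Proof.
  intros HLc HL HB. pose proof (bnd_pos F B HB) as HB0.
  exists (xlim F y0). split; [apply xlim0|]. split.
  - intros t Ht. split; [|split].
    + apply (xder pS F Lc B y0); auto. apply lip1; auto. apply c1.
      intros k x. apply (pic_der F Lc y0 HLc HL k x).
      intros s Hs. apply (conv F Lc B y0 HLc HL HB s Hs).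
    + apply (xder pI F Lc B y0); auto. apply lip2; auto. apply c2.
      intros k x. apply (pic_der F Lc y0 HLc HL k x).
      intros s Hs. apply (conv F Lc B y0 HLc HL HB s Hs).
    + apply (xder pR F Lc B y0); auto. apply lip3; auto. apply c3.
      intros k x. apply (pic_der F Lc y0 HLc HL k x).
      intros s Hs. apply (conv F Lc B y0 HLc HL HB s Hs).
  - assert (key : forall u, 0 <= u -> Rabs (pS (xlim F y0 u) - pS y0) <= B * u /\
               Rabs (pI (xlim F y0 u) - pI y0) <= B * u /\ Rabs (pR (xlim F y0 u) - pR y0) <= B * u).
    { intros u Hu. destruct (conv F Lc B y0 HLc HL HB u Hu) as [L1 [L2 L3]].
      split; [|split]; (eapply lim_near; [eassumption|]); intro n;
        (eapply Rle_trans; [|apply (drift F Lc B y0 HLc HL HB n u Hu)]).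
      apply c1. apply c2. apply c3. }
    split; [|split]; intros e He; cbv beta; rewrite xlim0; exists (e / (B + 1)); (split; [apply Rdiv_lt_0_compat; lra|]);
      intros u Hu; destruct (key u ltac:(lra)) as [K1 [K2 K3]];
      (assert (B * u < e) by (apply Rle_lt_trans with ((B + 1) * u); [nra|];
         apply Rmult_lt_reg_r with (/ (B + 1)); [apply Rinv_0_lt_compat; lra|];
         replace ((B + 1) * u * / (B + 1)) with u by (field; lra); unfold Rdiv in Hu; lra)); lra.
Qed.


Lemma sq_abs x d : 0 < d -> x * x < d * d -> Rabs x < d.
Proof.
  intros Hd H. destruct (Rle_or_lt d (Rabs x)) as [Hc|Hc]; [|exact Hc].
  assert (E : Rabs x * Rabs x = x * x) by (rewrite <- Rabs_mult; apply Rabs_pos_eq; nra).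
  nra.
Qed.

Lemma lyap_ineq (al be ga et rho c0 A M1 M2 Kc de c s i r : R) :
  0 < al -> 0 < be -> 0 < ga -> 0 < et -> 0 < rho < 1 ->
  c0 = al - rho * be -> 0 < c0 -> A = 2 * (Rabs (al - ga - be) + be) ->
  4 * ga * M1 = A * A -> et * M2 = al * al -> Kc * c0 = 2 * (M1 + M2) + c0 -> 1 <= Kc ->
  0 < de -> de <= 1/2 -> 8 * be * de <= c0 -> 0 < c -> c <= ga -> c <= et -> c <= c0 / 2 ->
  (s + r - 1) * (s + r - 1) + r * r + Kc * (i * i) < de * de ->
  2 * (s + r - 1) * ((- be * i * s + ga * (1 - s - i - r) + et * r) + (al * i - et * r))
  + 2 * r * (al * i - et * r)
  + 2 * Kc * i * (rho * be * i * s - al * i + be * i * (1 - s - i - r))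
  <= - c * ((s + r - 1) * (s + r - 1) + r * r + Kc * (i * i)).
Proof.
  intros Hal Hbe Hga Het Hrho Hc0 Hc0p HA HM1 HM2 HKc HK1 Hde Hde2 Hde3 Hc Hc1 Hc2 Hc3 HV.
  set (w := s + r - 1) in *. set (u := s - 1).
  assert (Hw2 : 0 <= w * w) by nra. assert (Hr2 : 0 <= r * r) by nra. assert (Hi2 : 0 <= i * i) by nra.
  assert (Hw : Rabs w < de) by (apply sq_abs; nra).
  assert (Hr : Rabs r < de) by (apply sq_abs; nra).
  assert (Hi : Rabs i < de) by (apply sq_abs; nra).
  assert (Hu : Rabs u < 2 * de).
  { replace u with (w - r) by (unfold u, w; ring).
    eapply Rle_lt_trans; [apply Rabs_triang|]. rewrite Rabs_Ropp. lra. }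
  set (aw := Rabs w) in *. set (ar := Rabs r) in *. set (ai := Rabs i) in *. set (au := Rabs u) in *.
  assert (Eaw : aw * aw = w * w) by (unfold aw; rewrite <- Rabs_mult; apply Rabs_pos_eq; nra).
  assert (Ear : ar * ar = r * r) by (unfold ar; rewrite <- Rabs_mult; apply Rabs_pos_eq; nra).
  assert (Eai : ai * ai = i * i) by (unfold ai; rewrite <- Rabs_mult; apply Rabs_pos_eq; nra).
  assert (Baw := Rabs_pos w). assert (Bar := Rabs_pos r). assert (Bai := Rabs_pos i). assert (Bau := Rabs_pos u).
  fold aw ar ai au in Baw, Bar, Bai, Bau.
  assert (Fw : Rabs w = aw) by reflexivity. assert (Fr : Rabs r = ar) by reflexivity.
  assert (Fi : Rabs i = ai) by reflexivity. assert (Fu : Rabs u = au) by reflexivity.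
  clearbody aw ar ai au.
  set (G := rho * be * s - al + be * (1 - s - i - r)).
  assert (EG : G = - c0 + (rho - 1) * be * u - be * i - be * r) by (unfold G, u; rewrite Hc0; ring).
  assert (Gu : (rho - 1) * be * u <= be * au).
  { assert (Hk : 0 <= (1 - rho) * be <= be) by (split; nra).
    assert (Hu' : - au <= u <= au) by (apply Rabs_le_between; rewrite Fu; lra).
    assert ((1 - rho) * be * (au + u) >= 0) by (apply Rle_ge, Rmult_le_pos; lra).
    assert ((be - (1 - rho) * be) * au >= 0) by (apply Rle_ge, Rmult_le_pos; lra).
    nra. }
  assert (Gi : - be * i <= be * ai).
  { assert (Hi' : - ai <= i <= ai) by (apply Rabs_le_between; rewrite Fi; lra). nra. }
  assert (Gr : - be * r <= be * ar).
  { assert (Hr' : - ar <= r <= ar) by (apply Rabs_le_between; rewrite Fr; lra). nra. }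
  assert (HG : G <= - c0 / 2).
  { rewrite EG. assert (be * au <= be * (2 * de)) by (apply Rmult_le_compat_l; lra).
    assert (be * ai <= be * de) by (apply Rmult_le_compat_l; lra).
    assert (be * ar <= be * de) by (apply Rmult_le_compat_l; lra). nra. }
  assert (X3 : 2 * Kc * i * (rho * be * i * s - al * i + be * i * (1 - s - i - r)) <= - (Kc * c0) * (i * i)).
  { replace (2 * Kc * i * (rho * be * i * s - al * i + be * i * (1 - s - i - r))) with (2 * Kc * (i * i) * G)
      by (unfold G; ring).
    assert (0 <= Kc * (i * i)) by nra. nra. }
  assert (Hsum : - be * i * s + ga * (1 - s - i - r) + et * r + (al * i - et * r)
                 = - ga * w + (al - ga - be) * i - be * i * u) by (unfold w, u; ring).
  assert (X1 : 2 * w * (- be * i * s + ga * (1 - s - i - r) + et * r + (al * i - et * r))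
               <= - 2 * ga * (w * w) + A * (aw * ai)).
  { rewrite Hsum.
    assert (T1 : (al - ga - be) * i * w <= Rabs (al - ga - be) * (aw * ai)).
    { eapply Rle_trans; [apply Rle_abs|]. rewrite !Rabs_mult, Fi, Fw. assert (0 <= Rabs (al - ga - be)) by apply Rabs_pos. nra. }
    assert (T2 : - be * i * u * w <= be * (aw * ai)).
    { eapply Rle_trans; [apply Rle_abs|]. rewrite !Rabs_mult. rewrite Rabs_Ropp, (Rabs_pos_eq be) by lra.
      rewrite Fi, Fu, Fw. assert (au <= 1) by lra.
      assert (0 <= ai * aw) by nra. assert (0 <= (1 - au) * (ai * aw)) by (apply Rmult_le_pos; lra). assert (0 <= be * ((1 - au) * (ai * aw))) by (apply Rmult_le_pos; lra). lra. }
    rewrite HA. nra. }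
  assert (X2 : 2 * r * (al * i - et * r) <= 2 * al * (ar * ai) - 2 * et * (r * r)).
  { assert (al * (r * i) <= al * (ar * ai)).
    { apply Rmult_le_compat_l; [lra|]. eapply Rle_trans; [apply Rle_abs|]. rewrite Rabs_mult, Fr, Fi. lra. }
    nra. }
  assert (Y1 : A * (aw * ai) <= ga * (w * w) + M1 * (i * i)).
  { assert (0 <= (2 * ga * aw - A * ai) * (2 * ga * aw - A * ai)) by apply Rle_0_sqr.
    assert (4 * ga * (A * (aw * ai)) <= 4 * ga * (ga * (w * w) + M1 * (i * i))).
    { rewrite <- Eaw, <- Eai. nra. }
    nra. }
  assert (Y2 : 2 * al * (ar * ai) <= et * (r * r) + M2 * (i * i)).
  { assert (0 <= (et * ar - al * ai) * (et * ar - al * ai)) by apply Rle_0_sqr.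
    assert (et * (2 * al * (ar * ai)) <= et * (et * (r * r) + M2 * (i * i))).
    { rewrite <- Ear, <- Eai. nra. }
    nra. }
  assert (Z1 : c * (w * w) <= ga * (w * w)) by (apply Rmult_le_compat_r; lra).
  assert (Z2 : c * (r * r) <= et * (r * r)) by (apply Rmult_le_compat_r; lra).
  assert (Z3 : c * (Kc * (i * i)) <= c0 / 2 * (Kc * (i * i))) by (apply Rmult_le_compat_r; nra).
  assert (Z4 : Kc * c0 * (i * i) = 2 * (M1 + M2) * (i * i) + c0 * (i * i)) by (rewrite HKc; ring).
  assert (Z5 : 0 <= c0 * (i * i)) by nra.
  nra.
Qed.


Definition cl (v : R) := Rmax (-2) (Rmin 2 v).

Lemma cl_bnd v : -2 <= cl v <= 2.
Proof. unfold cl, Rmax, Rmin. repeat destruct Rle_dec; lra. Qed.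
Lemma cl_lip v w : Rabs (cl v - cl w) <= Rabs (v - w).
Proof. unfold cl, Rmax, Rmin. apply Rabs_le. pose proof (Rle_abs (v - w)). pose proof (Rle_abs (-(v - w))).
  rewrite Rabs_Ropp in *. repeat destruct Rle_dec; lra. Qed.
Lemma cl_id v : -2 <= v <= 2 -> cl v = v.
Proof. intro. unfold cl, Rmax, Rmin. repeat destruct Rle_dec; lra. Qed.

Definition Phi a b g e r (y : state) : state :=
  sirw_field a b g e r (cl (pS y), cl (pI y), cl (pR y)).

Lemma mul_bnd k x X : 0 <= k -> -X <= x <= X -> -(k * X) <= k * x <= k * X.
Proof. intros Hk Hx. split; nra. Qed.

Lemma prod_bnd a b a' b' e f : -2 <= a <= 2 -> -2 <= b' <= 2 ->
  Rabs (a - a') <= e -> Rabs (b - b') <= f -> -(2 * (e + f)) <= a * b - a' * b' <= 2 * (e + f).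
Proof.
  intros Ha Hb He Hf. apply Rabs_le_between' in He. apply Rabs_le_between' in Hf.
  replace (a * b - a' * b') with (a * (b - b') + b' * (a - a')) by ring.
  assert (-2 * f <= a * (b - b') <= 2 * f).
  { assert (0 <= f) by lra. split; nra. }
  assert (-2 * e <= b' * (a - a') <= 2 * e).
  { assert (0 <= e) by lra. split; nra. }
  lra.
Qed.

Lemma Phi_lip a b g e r : 0 < a -> 0 < b -> 0 < g -> 0 < e -> 0 < r < 1 ->
  lipF (Phi a b g e r) (20 * (a + b + g + e)).
Proof.
  intros Ha Hb Hg He Hr y z.
  unfold n1d, Phi, sirw_field, pS, pI, pR. simpl.
  set (y1 := fst (fst y)). set (y2 := snd (fst y)). set (y3 := snd y).
  set (z1 := fst (fst z)). set (z2 := snd (fst z)). set (z3 := snd z).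
  pose proof (cl_bnd y1). pose proof (cl_bnd y2). pose proof (cl_bnd y3).
  pose proof (cl_bnd z1). pose proof (cl_bnd z2). pose proof (cl_bnd z3).
  pose proof (cl_lip y1 z1) as L1. pose proof (cl_lip y2 z2) as L2. pose proof (cl_lip y3 z3) as L3.
  set (d1 := Rabs (y1 - z1)) in *. set (d2 := Rabs (y2 - z2)) in *. set (d3 := Rabs (y3 - z3)) in *.
  set (a1 := cl y1) in *. set (a2 := cl y2) in *. set (a3 := cl y3) in *.
  set (b1 := cl z1) in *. set (b2 := cl z2) in *. set (b3 := cl z3) in *.
  assert (d1p : 0 <= d1) by apply Rabs_pos.
  assert (d2p : 0 <= d2) by apply Rabs_pos.
  assert (d3p : 0 <= d3) by apply Rabs_pos.
  clearbody a1 a2 a3 b1 b2 b3 d1 d2 d3.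
  assert (q11 := prod_bnd a2 a1 b2 b1 d2 d1 ltac:(lra) ltac:(lra) L2 L1).
  assert (q22 := prod_bnd a2 a2 b2 b2 d2 d2 ltac:(lra) ltac:(lra) L2 L2).
  assert (q23 := prod_bnd a2 a3 b2 b3 d2 d3 ltac:(lra) ltac:(lra) L2 L3).
  apply Rabs_le_between' in L1. apply Rabs_le_between' in L2. apply Rabs_le_between' in L3.
  assert (x1 : - d1 <= a1 - b1 <= d1) by lra.
  assert (x2 : - d2 <= a2 - b2 <= d2) by lra.
  assert (x3 : - d3 <= a3 - b3 <= d3) by lra.
  assert (P1 := mul_bnd b _ _ ltac:(lra) q11).
  assert (P2 := mul_bnd (r * b) _ _ ltac:(nra) q11).
  assert (P3 := mul_bnd b _ _ ltac:(lra) q22).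
  assert (P4 := mul_bnd b _ _ ltac:(lra) q23).
  assert (G1 := mul_bnd g _ _ ltac:(lra) x1).
  assert (G2 := mul_bnd g _ _ ltac:(lra) x2).
  assert (G3 := mul_bnd g _ _ ltac:(lra) x3).
  assert (E3 := mul_bnd e _ _ ltac:(lra) x3).
  assert (A2 := mul_bnd a _ _ ltac:(lra) x2).
  assert (B2 := mul_bnd b _ _ ltac:(lra) x2).
  assert (R1 : r * b * d1 <= b * d1).
  { assert (0 <= (1 - r) * (b * d1)) by (apply Rmult_le_pos; [lra|apply Rmult_le_pos; lra]). lra. }
  assert (R2 : r * b * d2 <= b * d2).
  { assert (0 <= (1 - r) * (b * d2)) by (apply Rmult_le_pos; [lra|apply Rmult_le_pos; lra]). lra. }
  assert (S1 : 0 <= a * d1) by (apply Rmult_le_pos; lra). assert (S2 : 0 <= a * d2) by (apply Rmult_le_pos; lra).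
  assert (S3 : 0 <= a * d3) by (apply Rmult_le_pos; lra).
  assert (T1 : 0 <= b * d1) by (apply Rmult_le_pos; lra). assert (T2 : 0 <= b * d2) by (apply Rmult_le_pos; lra).
  assert (T3 : 0 <= b * d3) by (apply Rmult_le_pos; lra).
  assert (U1 : 0 <= g * d1) by (apply Rmult_le_pos; lra). assert (U2 : 0 <= g * d2) by (apply Rmult_le_pos; lra).
  assert (U3 : 0 <= g * d3) by (apply Rmult_le_pos; lra).
  assert (V1 : 0 <= e * d1) by (apply Rmult_le_pos; lra). assert (V2 : 0 <= e * d2) by (apply Rmult_le_pos; lra).
  assert (V3 : 0 <= e * d3) by (apply Rmult_le_pos; lra).
  assert (K1 : Rabs (- b * a2 * a1 + g * (1 - a1 - a2 - a3) + e * a3 - (- b * b2 * b1 + g * (1 - b1 - b2 - b3) + e * b3))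
     <= 2 * b * (d1 + d2) + g * (d1 + d2 + d3) + e * d3) by (apply Rabs_le; split; lra).
  assert (K2 : Rabs (r * b * a2 * a1 - a * a2 + b * a2 * (1 - a1 - a2 - a3) -
     (r * b * b2 * b1 - a * b2 + b * b2 * (1 - b1 - b2 - b3)))
     <= 2 * b * (d1 + d2) + a * d2 + b * (d2 + 2 * (d1 + d2) + 4 * d2 + 2 * (d2 + d3))) by (apply Rabs_le; split; lra).
  assert (K3 : Rabs (a * a2 - e * a3 - (a * b2 - e * b3)) <= a * d2 + e * d3) by (apply Rabs_le; split; lra).
  lra.
Qed.

Lemma Phi_bnd a b g e r : 0 < a -> 0 < b -> 0 < g -> 0 < e -> 0 < r < 1 ->
  bndF (Phi a b g e r) (100 * (a + b + g + e)).
Proof.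
  intros Ha Hb Hg He Hr y.
  unfold Phi, sirw_field, pS, pI, pR. simpl.
  set (a1 := cl (fst (fst y))). set (a2 := cl (snd (fst y))). set (a3 := cl (snd y)).
  pose proof (cl_bnd (fst (fst y))). pose proof (cl_bnd (snd (fst y))). pose proof (cl_bnd (snd y)).
  fold a1 a2 a3 in H, H0, H1. clearbody a1 a2 a3.
  assert (p21 : -4 <= a2 * a1 <= 4) by (split; nra).
  assert (p22 : -4 <= a2 * a2 <= 4) by (split; nra).
  assert (p23 : -4 <= a2 * a3 <= 4) by (split; nra).
  assert (P1 := mul_bnd b _ 4 ltac:(lra) p21).
  assert (P2 := mul_bnd (r * b) _ 4 ltac:(nra) p21).
  assert (P3 := mul_bnd b _ 4 ltac:(lra) p22).
  assert (P4 := mul_bnd b _ 4 ltac:(lra) p23).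
  assert (x1 : -2 <= a1 <= 2) by lra. assert (x2 : -2 <= a2 <= 2) by lra. assert (x3 : -2 <= a3 <= 2) by lra.
  assert (G1 := mul_bnd g _ 2 ltac:(lra) x1). assert (G2 := mul_bnd g _ 2 ltac:(lra) x2).
  assert (G3 := mul_bnd g _ 2 ltac:(lra) x3). assert (E3 := mul_bnd e _ 2 ltac:(lra) x3).
  assert (A2 := mul_bnd a _ 2 ltac:(lra) x2). assert (B2 := mul_bnd b _ 2 ltac:(lra) x2).
  assert (R1 : r * b <= b) by (assert (0 <= (1 - r) * b) by (apply Rmult_le_pos; lra); lra).
  assert (H1' : Rabs (- b * a2 * a1 + g * (1 - a1 - a2 - a3) + e * a3) <= 4 * b + 7 * g + 2 * e)
    by (apply Rabs_le; split; lra).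
  assert (H2' : Rabs (r * b * a2 * a1 - a * a2 + b * a2 * (1 - a1 - a2 - a3)) <= 4 * b + 2 * a + 14 * b)
    by (apply Rabs_le; split; lra).
  assert (H3' : Rabs (a * a2 - e * a3) <= 2 * a + 2 * e) by (apply Rabs_le; split; lra).
  lra.
Qed.

Lemma Phi_eq a b g e r (y : state) : Rabs (pS y - 1) <= 1 -> Rabs (pI y) <= 1 -> Rabs (pR y) <= 1 ->
  Phi a b g e r y = sirw_field a b g e r y.
Proof.
  intros H1 H2 H3. apply Rabs_le_between' in H1. apply Rabs_le_between in H2. apply Rabs_le_between in H3.
  unfold Phi. rewrite (cl_id (pS y)), (cl_id (pI y)), (cl_id (pR y)) by lra.
  rewrite <- st_eta. reflexivity.
Qed.


Lemma fl_plus (f g : R -> R) a b : filterlim f (at_right 0) (locally a) -> filterlim g (at_right 0) (locally b) ->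
  filterlim (fun u => f u + g u) (at_right 0) (locally (a + b)).
Proof. intros H1 H2. eapply filterlim_comp_2; [exact H1|exact H2|]. apply (filterlim_plus a b). Qed.
Lemma fl_mult (f g : R -> R) a b : filterlim f (at_right 0) (locally a) -> filterlim g (at_right 0) (locally b) ->
  filterlim (fun u => f u * g u) (at_right 0) (locally (a * b)).
Proof. intros H1 H2. eapply filterlim_comp_2; [exact H1|exact H2|]. apply (filterlim_mult a b). Qed.

Lemma rc0_plus f g : rc0 f -> rc0 g -> rc0 (fun u => f u + g u).
Proof. intros H1 H2. apply rc0_of_fl. apply fl_plus; apply fl_of_rc0; auto. Qed.
Lemma rc0_mult f g : rc0 f -> rc0 g -> rc0 (fun u => f u * g u).
Proof. intros H1 H2. apply rc0_of_fl. apply fl_mult; apply fl_of_rc0; auto. Qed.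
Lemma rc0_const c : rc0 (fun _ => c).
Proof. intros e He. exists 1. split; [lra|]. intros. rewrite Rminus_eq_0, Rabs_R0. lra. Qed.
Lemma rc0_id : rc0 (fun u => u).
Proof. intros e He. exists e. split; [lra|]. intros u Hu. rewrite Rminus_0_r, Rabs_pos_eq; lra. Qed.
Lemma rc0_ext f g : (forall u, f u = g u) -> rc0 f -> rc0 g.
Proof. intros E H e He. destruct (H e He) as [d [Hd Hd']]. exists d. split; auto. intros u Hu.
  rewrite <- !E. apply Hd'; auto. Qed.

Lemma left_lim (g : R -> R) m c : 0 < m -> continuous g m -> (forall u, 0 <= u < m -> g u < c) -> g m <= c.
Proof.
  intros Hm Hc H. apply Rnot_lt_le. intro Hlt.
  destruct (cont_eps g m Hc (g m - c)) as [d [Hd Hd']]; [lra|].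
  set (u := Rmax 0 (m - d / 2)).
  assert (Hu1 : 0 <= u) by apply Rmax_l.
  assert (Hu2 : m - d/2 <= u) by apply Rmax_r.
  assert (Hu3 : u < m) by (unfold u, Rmax; destruct Rle_dec; lra).
  specialize (Hd' u ltac:(rewrite Rabs_left; lra)). specialize (H u ltac:(lra)).
  apply Rabs_lt_between in Hd'. lra.
Qed.


Definition E0 : state := (1, 0, 0).
Definition sq (y : state) := (pS y - 1)^2 + (pI y - 0)^2 + (pR y - 0)^2.

Lemma sq_pos y : 0 <= sq y.
Proof. unfold sq. pose proof (pow2_ge_0 (pS y - 1)). pose proof (pow2_ge_0 (pI y - 0)).
  pose proof (pow2_ge_0 (pR y - 0)). lra. Qed.

Lemma dist_lt y d : 0 < d -> (dist3 y E0 < d <-> sq y < d * d).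
Proof.
  intro Hd. change (dist3 y E0) with (sqrt (sq y)). pose proof (sq_pos y) as Hp. split.
  - intro H. pose proof (sqrt_sqrt (sq y) Hp). pose proof (sqrt_pos (sq y)). nra.
  - intro H. rewrite <- (sqrt_square d) by lra. apply sqrt_lt_1_alt. lra.
Qed.

Lemma sq_comp y e : 0 < e -> sq y < e * e -> Rabs (pS y - 1) < e /\ Rabs (pI y) < e /\ Rabs (pR y) < e.
Proof.
  intros He H. unfold sq in H. pose proof (pow2_ge_0 (pS y - 1)). pose proof (pow2_ge_0 (pI y - 0)).
  pose proof (pow2_ge_0 (pR y - 0)).
  split; [|split]; apply sq_abs; auto; simpl in *; nra.
Qed.

Definition Vf (Kc : R) (y : state) :=
  (pS y + pR y - 1) * (pS y + pR y - 1) + pR y * pR y + Kc * (pI y * pI y).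
Definition dVf (Kc : R) (F : state -> state) (y : state) :=
  2 * (pS y + pR y - 1) * (pS (F y) + pR (F y)) + 2 * pR y * pR (F y) + 2 * Kc * pI y * pI (F y).

Lemma Vder F Kc (x : R -> state) t :
  is_derive (fun u => pS (x u)) t (pS (F (x t))) -> is_derive (fun u => pI (x u)) t (pI (F (x t))) ->
  is_derive (fun u => pR (x u)) t (pR (F (x t))) ->
  is_derive (fun u => Vf Kc (x u)) t (dVf Kc F (x t)).
Proof.
  intros D1 D2 D3. unfold Vf, dVf. eapply dval.
  - apply dplus; [apply dplus|].
    + apply dmult; (apply dminus; [apply dplus; [exact D1|exact D3]|apply dconst]).
    + apply dmult; [exact D3|exact D3].
    + apply is_derive_scal. apply dmult; [exact D2|exact D2].
  - cbv beta. match goal with |- ?a = ?b => change (@eq R a b) end. ring.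
Qed.

Lemma Vrc Kc (x : R -> state) : rc0 (fun u => pS (x u)) -> rc0 (fun u => pI (x u)) -> rc0 (fun u => pR (x u)) ->
  rc0 (fun u => Vf Kc (x u)).
Proof.
  intros R1 R2 R3. unfold Vf.
  apply rc0_plus; [apply rc0_plus|].
  - apply rc0_mult; (apply rc0_plus; [apply rc0_plus; auto|apply rc0_const]).
  - apply rc0_mult; auto.
  - apply rc0_mult; [apply rc0_const|apply rc0_mult; auto].
Qed.

Lemma part_a al be ga et rho : 0 < al -> 0 < be -> 0 < ga -> 0 < et ->
  forall s i r : R, i = 0 ->
     (is_equilibrium (sirw_field al be ga et rho) (s, i, r) <-> (s, i, r) = (1, 0, 0)).
Proof.
  intros Hal Hbe Hga Het s i r ->. unfold is_equilibrium, sirw_field, pS, pI, pR. simpl. split.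
  - intro H. injection H as H1 H2 H3.
    assert (Hr : r = 0) by nra. subst r.
    assert (Hs : s = 1) by nra. subst s. reflexivity.
  - intro H. injection H as -> ->. f_equal; [f_equal|]; ring.
Qed.

Lemma b1_alg s i r K : 1 <= K ->
  (s - 1)^2 + (i - 0)^2 + (r - 0)^2 <= 3 * ((s + r - 1) * (s + r - 1) + r * r + K * (i * i)).
Proof.
  intro HK. replace ((s - 1)^2 + (i - 0)^2 + (r - 0)^2) with
    ((s + r - 1 - r) * (s + r - 1 - r) + i * i + r * r) by ring.
  set (w := s + r - 1). pose proof (Rle_0_sqr (w + r)). pose proof (Rle_0_sqr i). unfold Rsqr in *.
  assert (i * i <= K * (i * i)) by nra. nra.
Qed.

Lemma b2_alg s i r K : 1 <= K ->
  (s + r - 1) * (s + r - 1) + r * r + K * (i * i) <= (K + 3) * ((s - 1)^2 + (i - 0)^2 + (r - 0)^2).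
Proof.
  intro HK. replace ((s - 1)^2 + (i - 0)^2 + (r - 0)^2) with ((s - 1) * (s - 1) + i * i + r * r) by ring.
  replace (s + r - 1) with ((s - 1) + r) by ring.
  set (u := s - 1). pose proof (Rle_0_sqr (u - r)). pose proof (Rle_0_sqr i). pose proof (Rle_0_sqr u).
  pose proof (Rle_0_sqr r). unfold Rsqr in *. nra.
Qed.

Lemma stable_part al be ga et rho : 0 < al -> 0 < be -> 0 < ga -> 0 < et -> 0 < rho < 1 ->
  rho * be < al -> loc_asymp_stable (sirw_field al be ga et rho) E0.
Proof.
  intros Hal Hbe Hga Het Hrho HR.
  set (F := sirw_field al be ga et rho).
  set (c0 := al - rho * be). assert (Hc0 : 0 < c0) by (unfold c0; lra).
  set (A := 2 * (Rabs (al - ga - be) + be)).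
  assert (HA0 : 0 <= A) by (unfold A; pose proof (Rabs_pos (al - ga - be)); lra).
  set (M1 := A * A / (4 * ga)). assert (HM1 : 4 * ga * M1 = A * A) by (unfold M1; field; lra).
  assert (HM1p : 0 <= M1) by (unfold M1; apply Rmult_le_pos; [nra|left; apply Rinv_0_lt_compat; lra]).
  set (M2 := al * al / et). assert (HM2 : et * M2 = al * al) by (unfold M2; field; lra).
  assert (HM2p : 0 <= M2) by (unfold M2; apply Rmult_le_pos; [nra|left; apply Rinv_0_lt_compat; lra]).
  set (Kc := 2 * (M1 + M2) / c0 + 1).
  assert (HKc : Kc * c0 = 2 * (M1 + M2) + c0) by (unfold Kc; field; lra).
  assert (HK1 : 1 <= Kc).
  { unfold Kc. assert (0 <= 2 * (M1 + M2) / c0) by (apply Rmult_le_pos; [lra|left; apply Rinv_0_lt_compat; lra]). lra. }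
  set (de := Rmin (1/2) (c0 / (8 * be))).
  assert (Hde : 0 < de) by (unfold de; apply Rmin_glb_lt; [lra|apply Rdiv_lt_0_compat; lra]).
  assert (Hde2 : de <= 1/2) by apply Rmin_l.
  assert (Hde3 : 8 * be * de <= c0).
  { assert (de <= c0 / (8 * be)) by apply Rmin_r.
    apply Rmult_le_compat_l with (r := 8 * be) in H; [|lra].
    replace (8 * be * (c0 / (8 * be))) with c0 in H by (field; lra). lra. }
  set (c := Rmin ga (Rmin et (c0 / 2))).
  assert (Hc : 0 < c) by (unfold c; repeat apply Rmin_glb_lt; lra).
  assert (Hc1 : c <= ga) by apply Rmin_l.
  assert (Hc2 : c <= et) by (unfold c; eapply Rle_trans; [apply Rmin_r|apply Rmin_l]).
  assert (Hc3 : c <= c0 / 2) by (unfold c; eapply Rle_trans; [apply Rmin_r|apply Rmin_r]).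
  assert (Ec0 : c0 = al - rho * be) by reflexivity.
  assert (EA : A = 2 * (Rabs (al - ga - be) + be)) by reflexivity.
  clearbody c de Kc M1 M2 A c0.
  assert (Hly : forall y, Vf Kc y < de * de -> dVf Kc F y <= - c * Vf Kc y).
  { intros [[s i] r] Hy. unfold Vf, dVf, F, sirw_field, pS, pI, pR in *. simpl in *.
    apply (lyap_ineq al be ga et rho c0 A M1 M2 Kc de c s i r); auto. }
  assert (HVp : forall y, 0 <= Vf Kc y).
  { intro y. unfold Vf. pose proof (Rle_0_sqr (pS y + pR y - 1)). pose proof (Rle_0_sqr (pR y)).
    pose proof (Rle_0_sqr (pI y)). unfold Rsqr in *. nra. }
  assert (Hb1 : forall y, sq y <= 3 * Vf Kc y).
  { intro y. apply b1_alg; auto. }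
  assert (Hb2 : forall y, Vf Kc y <= (Kc + 3) * sq y).
  { intro y. apply b2_alg; auto. }
  assert (decay : forall x T, sol_on F x T -> Vf Kc (x 0) < de * de ->
            forall t, 0 <= t < T -> Vf Kc (x t) * (1 + c * t) <= Vf Kc (x 0)).
  { intros x T [Hd [H1 [H2 H3]]] H0 t Ht.
    set (psi := fun u => Vf Kc (x u) * (1 + c * u)).
    assert (Hpsi := barrier psi (fun u => dVf Kc F (x u) * (1 + c * u) + Vf Kc (x u) * c) T (de * de)).
    assert (E1 : psi 0 = Vf Kc (x 0)) by (unfold psi; ring).
    change (Vf Kc (x t) * (1 + c * t)) with (psi t). rewrite <- E1.
    apply Hpsi; auto.
    - unfold psi. apply rc0_mult.
      + apply Vrc; apply rc0_of_fl; auto.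
      + apply rc0_plus; [apply rc0_const|apply rc0_mult; [apply rc0_const|apply rc0_id]].
    - intros u Hu. destruct (Hd u Hu) as [D1 [D2 D3]]. unfold psi. eapply dval.
      + apply dmult; [apply Vder; eauto|apply dplus; [apply dconst|apply is_derive_scal; apply did]].
      + cbv beta. match goal with |- ?a = ?b => change (@eq R a b) end. ring.
    - rewrite E1. exact H0.
    - intros u Hu Hlt. unfold psi in Hlt.
      assert (HV := HVp (x u)).
      assert (Hcu : 0 <= c * u) by (apply Rmult_le_pos; lra).
      assert (Hl0 : 0 <= Vf Kc (x u) * (c * u)) by (apply Rmult_le_pos; lra).
      assert (Hl : Vf Kc (x u) <= Vf Kc (x u) * (1 + c * u)) by lra.
      assert (Hd' := Hly (x u) ltac:(lra)).
      assert (Hq : 0 <= c * (c * u) * Vf Kc (x u)) by (apply Rmult_le_pos; [apply Rmult_le_pos; lra|lra]).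
      assert (Hq2 : dVf Kc F (x u) * (1 + c * u) <= - c * Vf Kc (x u) * (1 + c * u))
        by (apply Rmult_le_compat_r; lra).
      lra. }
  split.
  - intros eps Heps.
    set (m := Rmin (de * de) (eps * eps / 3)).
    assert (Hm : 0 < m) by (unfold m; apply Rmin_glb_lt; nra).
    assert (Hm1 : m <= de * de) by apply Rmin_l.
    assert (Hm2 : m <= eps * eps / 3) by apply Rmin_r.
    set (dl := Rmin 1 (m / (Kc + 4))).
    assert (Hdl : 0 < dl) by (unfold dl; apply Rmin_glb_lt; [lra|apply Rdiv_lt_0_compat; lra]).
    assert (Hdl1 : dl <= 1) by apply Rmin_l.
    assert (Hdl2 : dl * (Kc + 4) <= m).
    { assert (dl <= m / (Kc + 4)) by apply Rmin_r.
      apply Rmult_le_compat_r with (r := Kc + 4) in H; [|lra].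
      replace (m / (Kc + 4) * (Kc + 4)) with m in H by (field; lra). exact H. }
    exists dl. split; auto. intros x T HT Hsol Hd0 t Ht.
    apply (dist_lt _ _ Hdl) in Hd0.
    assert (HV0 : Vf Kc (x 0) < m).
    { pose proof (Hb2 (x 0)). pose proof (sq_pos (x 0)).
      assert (dl * dl <= dl) by nra. nra. }
    pose proof (decay x T Hsol ltac:(lra) t Ht).
    assert (Vf Kc (x t) <= Vf Kc (x t) * (1 + c * t)).
    { pose proof (HVp (x t)). assert (0 <= c * t * Vf Kc (x t)) by (apply Rmult_le_pos; [nra|lra]). nra. }
    apply dist_lt; auto. pose proof (Hb1 (x t)). lra.
  - set (dl := Rmin 1 (de * de / (Kc + 4))).
    assert (Hdl : 0 < dl) by (unfold dl; apply Rmin_glb_lt; [lra|apply Rdiv_lt_0_compat; nra]).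
    assert (Hdl1 : dl <= 1) by apply Rmin_l.
    assert (Hdl2 : dl * (Kc + 4) <= de * de).
    { assert (dl <= de * de / (Kc + 4)) by apply Rmin_r.
      apply Rmult_le_compat_r with (r := Kc + 4) in H; [|lra].
      replace (de * de / (Kc + 4) * (Kc + 4)) with (de * de) in H by (field; lra). exact H. }
    exists dl. split; auto. intros x Hglob Hd0.
    apply (dist_lt _ _ Hdl) in Hd0.
    set (V0 := Vf Kc (x 0)).
    assert (HV0 : V0 < de * de).
    { unfold V0. pose proof (Hb2 (x 0)). pose proof (sq_pos (x 0)).
      assert (dl * dl <= dl) by nra. nra. }
    assert (HV0p : 0 <= V0) by apply HVp.
    assert (key : forall t, 0 <= t -> sq (x t) * (1 + c * t) <= 3 * V0).
    { intros t Ht. pose proof (decay x (t + 1) (Hglob (t + 1) ltac:(lra)) HV0 t ltac:(lra)).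
      pose proof (Hb1 (x t)). assert (0 <= 1 + c * t) by nra. fold V0 in H.
      assert (sq (x t) * (1 + c * t) <= 3 * Vf Kc (x t) * (1 + c * t)) by (apply Rmult_le_compat_r; lra).
      lra. }
    apply filterlim_locally. intros [eps Heps].
    exists (3 * V0 / (c * (eps * eps))). intros t Ht.
    assert (HM : 0 <= 3 * V0 / (c * (eps * eps))).
    { apply Rmult_le_pos; [lra|left; apply Rinv_0_lt_compat; apply Rmult_lt_0_compat; nra]. }
    assert (Ht0 : 0 <= t) by lra.
    assert (Hct : 3 * V0 < c * t * (eps * eps)).
    { apply Rmult_lt_compat_r with (r := c * (eps * eps)) in Ht; [|apply Rmult_lt_0_compat; nra].
      replace (3 * V0 / (c * (eps * eps)) * (c * (eps * eps))) with (3 * V0) in Ht by (field; nra). nra. }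
    apply ballR. simpl.
    assert (Hsq : sq (x t) < eps * eps).
    { pose proof (key t Ht0). pose proof (sq_pos (x t)).
      destruct (Rlt_or_le (sq (x t)) (eps * eps)) as [Hl|Hl]; [exact Hl|].
      assert (eps * eps * (c * t) <= sq (x t) * (c * t)) by (apply Rmult_le_compat_r; nra). nra. }
    apply (dist_lt _ _ Heps) in Hsq.
    rewrite Rminus_0_r, Rabs_pos_eq; [exact Hsq|]. apply sqrt_pos.
Qed.

Lemma rc0_minus f g : rc0 f -> rc0 g -> rc0 (fun u => f u - g u).
Proof.
  intros H1 H2 e He. destruct (H1 (e/2)) as [d1 [Hd1 Hd1']]; [lra|]. destruct (H2 (e/2)) as [d2 [Hd2 Hd2']]; [lra|].
  exists (Rmin d1 d2). split; [apply Rmin_glb_lt; lra|]. intros u Hu.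
  assert (u < d1) by (eapply Rlt_le_trans; [apply Hu|apply Rmin_l]).
  assert (u < d2) by (eapply Rlt_le_trans; [apply Hu|apply Rmin_r]).
  specialize (Hd1' u ltac:(lra)). specialize (Hd2' u ltac:(lra)).
  replace (f u - g u - (f 0 - g 0)) with ((f u - f 0) - (g u - g 0)) by ring.
  eapply Rle_lt_trans; [apply Rabs_triang|]. rewrite Rabs_Ropp. lra.
Qed.

Lemma G_low al be rho eps0 (y : state) : 0 < be -> 0 < rho < 1 -> 0 < eps0 -> 6 * be * eps0 <= rho * be - al ->
  sq y < eps0 * eps0 -> (rho * be - al) / 2 <= rho * be * pS y - al + be * (1 - pS y - pI y - pR y).
Proof.
  intros Hbe Hrho He Hk Hy. destruct (sq_comp y eps0 He Hy) as [Hu [Hi Hr]].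
  apply Rabs_lt_between in Hu. apply Rabs_lt_between in Hi. apply Rabs_lt_between in Hr.
  set (u := pS y - 1) in *.
  replace (rho * be * pS y - al + be * (1 - pS y - pI y - pR y))
    with ((rho * be - al) + (rho - 1) * be * u - be * pI y - be * pR y) by (unfold u; ring).
  assert (K1 : 0 <= (1 - rho) * be <= be) by (split; nra).
  assert (K2 : 0 <= (1 - rho) * be * (eps0 - u)) by (apply Rmult_le_pos; lra).
  assert (K3 : 0 <= (be - (1 - rho) * be) * eps0) by (apply Rmult_le_pos; lra).
  assert (K4 : 0 <= be * (eps0 + pI y)) by (apply Rmult_le_pos; lra).
  assert (K5 : 0 <= be * (eps0 + pR y)) by (apply Rmult_le_pos; lra).
  nra.
Qed.

Lemma unstable_part al be ga et rho : 0 < al -> 0 < be -> 0 < ga -> 0 < et -> 0 < rho < 1 ->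
  al < rho * be -> unstable (sirw_field al be ga et rho) E0.
Proof.
  intros Hal Hbe Hga Het Hrho HR Hst.
  set (F := sirw_field al be ga et rho).
  set (k0 := rho * be - al). assert (Hk0 : 0 < k0) by (unfold k0; lra).
  set (eps0 := Rmin (1/2) (k0 / (6 * be))).
  assert (He0 : 0 < eps0) by (unfold eps0; apply Rmin_glb_lt; [lra|apply Rdiv_lt_0_compat; lra]).
  assert (He1 : eps0 <= 1/2) by apply Rmin_l.
  assert (He2 : 6 * be * eps0 <= k0).
  { assert (eps0 <= k0 / (6 * be)) by apply Rmin_r.
    apply Rmult_le_compat_l with (r := 6 * be) in H; [|lra].
    replace (6 * be * (k0 / (6 * be))) with k0 in H by (field; lra). lra. }
  destruct (Hst (eps0 / 2) ltac:(lra)) as [dl [Hdl Hdl']].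
  set (i0 := Rmin dl eps0 / 2).
  assert (Hi0 : 0 < i0) by (unfold i0; apply Rdiv_lt_0_compat; [apply Rmin_glb_lt|]; lra).
  assert (Hi1 : i0 < dl) by (unfold i0; pose proof (Rmin_l dl eps0); lra).
  assert (Hi2 : i0 < eps0) by (unfold i0; pose proof (Rmin_r dl eps0); lra).
  set (y0 := (1, i0, 0) : state).
  destruct (picard (Phi al be ga et rho) (20 * (al + be + ga + et)) (100 * (al + be + ga + et)) y0)
    as [x [Hx0 [Hder [R1 [R2 R3]]]]]; [lra|apply Phi_lip; auto|apply Phi_bnd; auto|].
  assert (Hreg : forall y, sq y < eps0 * eps0 -> Phi al be ga et rho y = F y).
  { intros y Hy. destruct (sq_comp y eps0 He0 Hy) as [A1 [A2 A3]]. apply Phi_eq; lra. }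
  assert (HG : forall y, sq y < eps0 * eps0 -> k0 / 2 <= rho * be * pS y - al + be * (1 - pS y - pI y - pR y)).
  { intros y Hy. apply (G_low al be rho eps0 y); auto. }
  assert (HIF : forall y, pI (F y) = pI y * (rho * be * pS y - al + be * (1 - pS y - pI y - pR y))).
  { intros [[s i] r]. unfold F, sirw_field, pS, pI, pR. simpl. ring. }
  set (g := fun u => sq (x u)).
  assert (Hgc : forall t, 0 < t -> continuous g t).
  { intros t Ht. destruct (Hder t Ht) as [D1 [D2 D3]]. eapply derive_cont. unfold g, sq.
    apply dplus; [apply dplus|]; apply is_derive_pow; (apply dminus; [eassumption|apply dconst]). }
  assert (Hgr : rc0 g).
  { apply rc0_ext with (fun u => (pS (x u) - 1) * (pS (x u) - 1) + (pI (x u) - 0) * (pI (x u) - 0)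
                                 + (pR (x u) - 0) * (pR (x u) - 0)).
    { intro u. unfold g, sq. ring. }
    apply rc0_plus; [apply rc0_plus|]; apply rc0_mult; apply rc0_minus; auto; apply rc0_const. }
  assert (Hsol : forall m, 0 < m -> (forall u, 0 <= u < m -> sq (x u) < eps0 * eps0) -> sol_on F x m).
  { intros m Hm HA. split; [|split; [|split]].
    - intros t Ht. rewrite <- (Hreg (x t)) by (apply HA; lra). apply Hder. lra.
    - apply fl_of_rc0. exact R1.
    - apply fl_of_rc0. exact R2.
    - apply fl_of_rc0. exact R3. }
  assert (Hsq0 : sq (x 0) = i0 * i0) by (rewrite Hx0; unfold sq, y0, pS, pI, pR; simpl; ring).
  set (k := k0 / 2). assert (Hk : 0 < k) by (unfold k; lra).
  set (T := eps0 / (k * i0) + 1).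
  assert (HT : 1 <= T).
  { unfold T. assert (0 <= eps0 / (k * i0)) by (apply Rmult_le_pos; [lra|left; apply Rinv_0_lt_compat; nra]). lra. }
  assert (C1 : forall t, 0 <= t <= T -> sq (x t) < eps0 * eps0).
  { apply (cont_ind g T (eps0 * eps0)); [lra| |exact Hgr| |].
    - unfold g. rewrite Hsq0. nra.
    - intros t Ht. apply Hgc. lra.
    - intros m Hm HA.
      assert (Hs := Hsol m ltac:(lra) HA).
      assert (Hd0 : dist3 (x 0) E0 < dl) by (apply dist_lt; [lra|]; rewrite Hsq0; nra).
      assert (Hsm := Hdl' x m ltac:(lra) Hs Hd0).
      assert (Hle : g m <= eps0 / 2 * (eps0 / 2)).
      { apply left_lim; [lra|apply Hgc; lra|]. intros u Hu. unfold g. apply dist_lt; [lra|]. apply Hsm. lra. }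
      nra. }
  assert (HsT := Hsol T ltac:(lra) ltac:(intros u Hu; apply C1; lra)).
  destruct HsT as [HdT _].
  assert (C3 : forall t, 0 <= t < T -> 0 - pI (x t) <= 0 - pI (x 0)).
  { apply (barrier (fun u => 0 - pI (x u)) (fun u => 0 - pI (F (x u))) T 0).
    - apply rc0_minus; [apply rc0_const|exact R2].
    - intros t Ht. destruct (HdT t Ht) as [_ [D2 _]]. apply dminus; [apply dconst|exact D2].
    - rewrite Hx0. unfold y0, pI. simpl. lra.
    - intros t Ht Hlt. rewrite HIF. assert (HG' := HG (x t) (C1 t ltac:(lra))).
      assert (0 <= pI (x t) * (rho * be * pS (x t) - al + be * (1 - pS (x t) - pI (x t) - pR (x t))))
        by (apply Rmult_le_pos; lra). lra. }
  assert (HpI0 : pI (x 0) = i0) by (rewrite Hx0; reflexivity).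
  set (t1 := T - 1/2).
  set (h := fun u => i0 + k * i0 * u - pI (x u)).
  assert (Hm := mono0 h (fun u => k * i0 - pI (F (x u))) t1 ltac:(unfold t1; lra)).
  assert (Hh : h t1 <= h 0).
  { apply Hm.
    - unfold h. apply rc0_minus; [apply rc0_plus; [apply rc0_const|apply rc0_mult; [apply rc0_const|apply rc0_id]]|exact R2].
    - intros s Hs. destruct (HdT s ltac:(unfold t1 in Hs; lra)) as [_ [D2 _]]. unfold h. eapply dval.
      + apply dminus; [apply dplus; [apply dconst|apply is_derive_scal; apply did]|exact D2].
      + cbv beta. match goal with |- ?a = ?b => change (@eq R a b) end. ring.
    - intros s Hs. rewrite HIF.
      assert (HG' := HG (x s) (C1 s ltac:(unfold t1 in Hs; lra))).
      assert (Hi : i0 <= pI (x s)) by (pose proof (C3 s ltac:(unfold t1 in Hs; lra)); lra).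
      fold k in HG'.
      assert (k * i0 <= k * pI (x s)) by (apply Rmult_le_compat_l; lra).
      assert (k * pI (x s) <= pI (x s) * (rho * be * pS (x s) - al + be * (1 - pS (x s) - pI (x s) - pR (x s))))
        by (rewrite (Rmult_comm k); apply Rmult_le_compat_l; lra).
      lra. }
  unfold h in Hh. rewrite HpI0 in Hh.
  assert (Hkt : eps0 < k * i0 * t1).
  { unfold t1, T. replace (k * i0 * (eps0 / (k * i0) + 1 - 1/2)) with (eps0 + k * i0 / 2) by (field; nra). nra. }
  destruct (sq_comp (x t1) eps0 He0 (C1 t1 ltac:(unfold t1; lra))) as [_ [Hi _]].
  apply Rabs_lt_between in Hi. lra.
Qed.

Theorem theorem1 (alpha beta gamma eta rho : R) :
  0 < alpha -> 0 < beta -> 0 < gamma -> 0 < eta -> 0 < rho < 1 ->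
  alpha <= gamma ->
  (forall s i r : R, i = 0 ->
     (is_equilibrium (sirw_field alpha beta gamma eta rho) (s, i, r)
      <-> (s, i, r) = (1, 0, 0))) /\
  (basic_R0 alpha beta rho < 1 ->
     loc_asymp_stable (sirw_field alpha beta gamma eta rho) (1, 0, 0)) /\
  (basic_R0 alpha beta rho > 1 ->
     unstable (sirw_field alpha beta gamma eta rho) (1, 0, 0)).
Proof.
  intros Hal Hbe Hga Het Hrho Hag. split; [|split].
  - apply part_a; auto.
  - intro H. unfold basic_R0 in H. apply (stable_part alpha beta gamma eta rho); auto.
    apply Rmult_lt_compat_r with (r := alpha) in H; [|lra].
    unfold Rdiv in H. rewrite Rmult_assoc, Rinv_l, Rmult_1_r, Rmult_1_l in H by lra. exact H.
  - intro H. unfold basic_R0 in H. apply (unstable_part alpha beta gamma eta rho); auto.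
    apply Rmult_lt_compat_r with (r := alpha) in H; [|lra].
    unfold Rdiv in H. rewrite Rmult_assoc, Rinv_l, Rmult_1_r, Rmult_1_l in H by lra. exact H.
Qed.
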